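(* Let $A \subset \mathbb{Z}$ be a finite set with $\min A = 0$, $\max A = b$, and $\gcd A = 1$. Let $\mathcal{C}_A = \{\sum_{a \in A} n_a (a,1) : n_a \in \mathbb{N}\} \subset \mathbb{Z}^2$, $\Lambda = \{(bn, m+n) : m,n \in \mathbb{Z}\}$, and $\Lambda^+ = \{(bn, m+n) : m,n \in \mathbb{N}\}$. For $a \in \{0,\ldots,b-1\}$ let $\mathcal{S}_a$ be the set of points of $\mathcal{C}_A$ congruent to $(a,1)$ modulo $\Lambda$, let $(g_a,h_a) \in \mathbb{N}^2$ be the unique point such that $\mathcal{S}_a \subseteq (g_a,h_a) + \Lambda^+$ and $E_a := ((g_a,h_a) + \Lambda^+) \setminus \mathcal{S}_a$ is finite. Then every $(n,h) \in E_a$ satisfies $h \leq 2b - 5$.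
   Context: $\mathbb{N} = \{0,1,2,\ldots\}$. The existence and uniqueness of $(g_a,h_a)$ as described is part of the setting (it is proved in the paper). *)

(* Defs.v *)
From HB Require Import structures.
From mathcomp Require Import all_boot all_order all_algebra.
From mathcomp Require Import finmap.
From mathcomp Require Import boolp classical_sets cardinality.
Set Implicit Arguments. Unset Strict Implicit. Unset Printing Implicit Defensive.
Import Order.TTheory GRing.Theory Num.Theory.
Local Open Scope ring_scope.
Local Open Scope classical_set_scope.

Definition coneA (A : {fset int}) : set (int * int) :=
  [set p | exists n : int -> nat,
      p.1 = \sum_(a <- A) (n a)%:Z * a /\ p.2 = \sum_(a <- A) (n a)%:Z].

Definition Lam (b : int) : set (int * int) :=
  [set p | exists m n : int, p = (b * n, m + n)].

Definition LamP (b : int) : set (int * int) :=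
  [set p | exists m n : nat, p = (b * n%:Z, m%:Z + n%:Z)].

Definition Sa (A : {fset int}) (b a : int) : set (int * int) :=
  [set p | coneA A p /\ Lam b (p.1 - a, p.2 - 1)].

Definition shiftLamP (b g h : int) : set (int * int) :=
  [set p | LamP b (p.1 - g, p.2 - h)].

Definition Ea (A : {fset int}) (b a g h : int) : set (int * int) :=
  shiftLamP b g h `\` Sa A b a.

(* Main.v *)
From HB Require Import structures.
From mathcomp Require Import all_boot all_order all_algebra.
From mathcomp Require Import finmap.
From mathcomp Require Import boolp classical_sets cardinality.
From mathcomp Require Import zify.
Require Import Defs.
Set Implicit Arguments. Unset Strict Implicit. Unset Printing Implicit Defensive.
Import Order.TTheory GRing.Theory Num.Theory.
Local Open Scope ring_scope.
Local Open Scope classical_set_scope.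



Local Open Scope nat_scope.

Lemma sumn_le_bound (B : nat) (s : seq nat) :
  all (fun y => y <= B) s -> sumn s <= B * size s.
Proof.
elim: s => [|y s IH] //= /andP[hy hs]; have := IH hs; lia.
Qed.

Lemma aux B x y : 0 < B -> x <= B.-1 * y -> 0 < y -> x < y * B.
Proof. case: B => // B _ /=; nia. Qed.

Lemma pigeon (B : nat) (o : seq nat) : 0 < B ->
  all (fun y => 0 < y < B) o -> B <= size o ->
  exists o' q, {subset o' <= o} /\ sumn o = sumn o' + q * B /\
     size o' + q < size o.
Proof.
move=> B0 ho hs.
pose f (i : 'I_(B.+1)) : 'I_B := Ordinal (ltn_pmod (sumn (take i o)) B0).
have : ~~ injectiveb f.
  apply/negP => /injectiveP inj; have := leq_card f inj; rewrite !card_ord; lia.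
move/injectivePn => [i [j nij /(congr1 val) /= eqm]].
wlog lij : i j nij eqm / i < j.
  move=> W; case: (ltngtP i j) => [l|l|e]; first exact: (W i j).
  - apply: (W j i) => //; by rewrite eq_sym.
  - by move: nij; rewrite (val_inj e) eqxx.
have hj : j <= size o by have := ltn_ord j; lia.
set blk := drop i (take j o).
have etj : take j o = take i o ++ blk by rewrite -{1}(cat_take_drop i (take j o)) take_takel // ltnW.
have sblk : size blk = j - i by rewrite size_drop size_take; case: ltnP; lia.
have dv : B %| sumn blk.
  have : sumn (take i o) = sumn (take i o) + sumn blk %[mod B].
    by rewrite -sumn_cat -etj eqm.
  move/eqP; rewrite eq_sym eqn_mod_dvd ?leq_addr // addKn //.
have hblk : all (fun y => y <= B.-1) blk.
  apply/allP => y /mem_drop /mem_take yo; move/allP: ho => /(_ y yo); lia.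
have bnd := sumn_le_bound hblk; rewrite sblk in bnd.
exists (take i o ++ drop j o), (sumn blk %/ B); split.
  move=> y; rewrite mem_cat => /orP[/mem_take|/mem_drop] //.
split.
  rewrite divnK // sumn_cat -addnA [sumn (drop j o) + _]addnC addnA -sumn_cat -etj.
  by rewrite -sumn_cat cat_take_drop.
rewrite size_cat size_take size_drop.
have his : i < size o by lia.
rewrite his.
have : sumn blk %/ B < j - i by rewrite ltn_divLR //; apply: (aux B0 bnd); lia.
lia.
Qed.

Definition mid (B : nat) : pred nat := fun y => 0 < y < B.
Arguments mid : simpl never.
Definition isB (B : nat) : pred nat := fun y => y == B.
Arguments isB : simpl never.

Lemma split_sum B (s : seq nat) : 0 < B -> all (fun y => y <= B) s ->
  sumn s = count (isB B) s * B + sumn (filter (mid B) s) /\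
  count (isB B) s + size (filter (mid B) s) <= size s.
Proof.
move=> B0; elim: s => [|y s IH] //= /andP[hy /IH [e1 e2]].
case: (ltnP 0 y) => y0.
  case: (ltnP y B) => yB.
    have -> : mid B y by rewrite /mid y0 yB.
    rewrite (_ : isB B y = false); last by rewrite /isB; apply/eqP; lia.
    rewrite /=; split; nia.
  have -> : y = B by lia.
  have -> : mid B B = false by rewrite /mid ltnn andbF.
  rewrite (_ : isB B B = true); last by rewrite /isB eqxx.
  rewrite /=; split; nia.
have -> : y = 0 by lia.
have -> : mid B 0 = false by [].
rewrite (_ : isB B 0 = false) /=; first by split; nia.
by rewrite /isB; apply/eqP; lia.
Qed.

Lemma reduce B (P : pred nat) : 0 < B -> P B -> (forall y, P y -> y <= B) ->
  forall K x s, all P s -> sumn s = x -> size s = K ->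
  exists c o, all P o /\ all (fun y => 0 < y < B) o /\ size o < B /\
     x = c * B + sumn o /\ c + size o <= K.
Proof.
move=> B0 PB Ple K; elim/ltn_ind: K => K IH x s hP hx hK.
have hle : all (fun y => y <= B) s by apply/allP => y /(allP hP) /Ple.
have [e1 e2] := split_sum B0 hle.
set o := filter _ s in e1 e2.
have oP : all P o by apply/allP => y; rewrite mem_filter => /andP[_ /(allP hP)].
have oB : all (fun y => 0 < y < B) o by apply/allP => y; rewrite mem_filter => /andP[].
case: (ltnP (size o) B) => so.
  by exists (count (isB B) s), o; do !split => //; lia.
have [o' [q [sub [es sz]]]] := pigeon B0 oB so.
have o'P : all P o' by apply/allP => y /sub /(allP oP).
have lt : count (isB B) s + q + size o' < K by lia.
have a1 : all P (nseq (count (isB B) s + q) B ++ o').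
  by rewrite all_cat o'P andbT; apply/allP => y /nseqP [-> _].
have a2 : sumn (nseq (count (isB B) s + q) B ++ o') = x.
  by rewrite sumn_cat sumn_nseq; nia.
have a3 : size (nseq (count (isB B) s + q) B ++ o') = count (isB B) s + q + size o'.
  by rewrite size_cat size_nseq.
have [c [o2 [h1 [h2 [h3 [h4 h5]]]]]] := IH _ lt x _ a1 a2 a3.
exists c, o2; do !split => //; lia.
Qed.

Local Open Scope ring_scope.

Definition inA (A : {fset int}) : pred nat := fun y => (y%:Z \in A).

Lemma sum_indic (A : {fset int}) (y : int) (F : int -> int) : y \in A ->
  \sum_(a <- A) ((y == a)%:R * F a) = F y.
Proof.
move=> yA; rewrite (big_rem _ yA) /= eqxx mul1r big1_seq ?addr0 // => a /andP[_].
rewrite (mem_rem_uniq _ (fset_uniq A)) => /andP[ne _].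
by rewrite eq_sym (negbTE ne) mul0r.
Qed.

Lemma sum_count (A : {fset int}) (F : int -> int) (s : seq nat) : all (inA A) s ->
  \sum_(a <- A) ((count (fun y : nat => y%:Z == a) s)%:R * F a) = \sum_(y <- s) F y%:Z.
Proof.
elim: s => [|y s IH] /=.
  by move=> _; rewrite big_nil big1 // => a _; rewrite mul0r.
move=> /andP[hy hs]; rewrite big_cons -(IH hs) -(sum_indic F hy) -big_split /=.
by apply: eq_bigr => a _; rewrite natrD mulrDl.
Qed.

Lemma sum_natz (s : seq nat) : \sum_(y <- s) (y%:Z) = (sumn s)%:Z.
Proof. by elim: s => [|y s IH]; rewrite ?big_nil ?big_cons ?IH //= PoszD. Qed.

Lemma sum_onez (s : seq nat) : \sum_(y <- s) (1 : int) = (size s)%:Z.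
Proof. by elim: s => [|y s IH]; rewrite ?big_nil ?big_cons ?IH //= -add1n PoszD. Qed.

Lemma cone_of_rep (A : {fset int}) (s : seq nat) : all (inA A) s ->
  coneA A ((sumn s)%:Z, (size s)%:Z).
Proof.
move=> hs; exists (fun a => count (fun y : nat => y%:Z == a) s) => /=; split.
  by rewrite -sum_natz -(sum_count id hs); apply: eq_bigr => a _; rewrite natz.
rewrite -sum_onez -(sum_count (fun _ => 1) hs).
by apply: eq_bigr => a _; rewrite mulr1 natz.
Qed.

Lemma rep_of_cone (A : {fset int}) (hmin : forall x, x \in A -> 0 <= x) X K :
  coneA A (X, K) -> exists s : seq nat, all (inA A) s /\ X = (sumn s)%:Z /\ K = (size s)%:Z.
Proof.
case=> n /= [-> ->].
have : {subset (A : seq int) <= A} by [].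
elim: (A : seq int) => [|a r IH] sub.
  by exists [::]; rewrite !big_nil.
have aA : a \in A by apply: sub; rewrite mem_head.
have [|s [h1 [h2 h3]]] := IH; first by move=> x xr; apply: sub; rewrite inE xr orbT.
exists (nseq (n a) `|a|%N ++ s); split.
  rewrite all_cat h1 andbT; apply/allP => y /nseqP [-> _].
  by rewrite /inA gez0_abs // hmin.
rewrite !big_cons h2 h3 sumn_cat size_cat sumn_nseq size_nseq !PoszD PoszM.
by rewrite gez0_abs ?hmin // mulrC.
Qed.

Lemma fin_pick (Sh S : set (int * int)) (f : nat -> int * int) :
  finite_set (Sh `\` S) -> injective f -> (forall j, Sh (f j)) -> exists j, S (f j).
Proof.
move=> fin inj hSh; apply: contrapT => hn.
have : finite_set (f @^-1` (Sh `\` S)).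
  by apply: finite_preimage => // x y _ _ /inj.
have -> : f @^-1` (Sh `\` S) = setT.
  apply/seteqP; split => // j _; split => // hS; apply: hn; by exists j.
exact: infinite_nat.
Qed.

Lemma build (A : {fset int}) (B : nat) (hB : B%:Z \in A) (h0 : 0 \in A) c o kk :
  all (inA A) o -> (c + size o <= kk)%N -> coneA A ((c * B + sumn o)%:Z, kk%:Z).
Proof.
move=> ho hk.
have := cone_of_rep (s := nseq c B ++ o ++ nseq (kk - (c + size o)) 0%N) (A := A).
rewrite !sumn_cat !size_cat !sumn_nseq !size_nseq mul0n addn0 [(B * c)%N]mulnC.
have -> : (c + (size o + (kk - (c + size o))) = kk)%N by lia.
apply; rewrite !all_cat ho /=; apply/andP; split; apply/allP => y /nseqP [-> _] //.
Qed.

Theorem corollary5p3 (A : {fset int}) (b : int)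
  (hmin_in : 0 \in A) (hmin : forall x, x \in A -> 0 <= x)
  (hmax_in : b \in A) (hmax : forall x, x \in A -> x <= b)
  (hgcd : \big[gcdn/0%N]_(x <- A) `|x|%N = 1%N)
  (a : int) (ha0 : 0 <= a) (hab : a < b)
  (g h : nat)
  (hsub : Sa A b a `<=` shiftLamP b g%:Z h%:Z)
  (hfin : finite_set (Ea A b a g%:Z h%:Z)) :
  forall n k : int, Ea A b a g%:Z h%:Z (n, k) -> k <= 2 * b - 5.
Proof.
move=> n k [[m [t /= [e1 e2]]] nS].
set B := `|b|%N.
have bB : b = B%:Z by rewrite /B gez0_abs //; lia.
have B0 : (0 < B)%N by lia.
have PB : inA A B by rewrite /inA -bB.
have Ple : forall y, inA A y -> (y <= B)%N.
  by move=> y /hmax; rewrite bB; lia.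
have [j0 [cone0 [m' [N /= [eN _]]]]] :
    exists j : nat, Sa A b a ((fun j : nat => (n, k + j%:Z)) j).
  apply: fin_pick hfin _ _.
    by move=> j1 j2 [] hj; lia.
  move=> j; exists (m + j)%N, t; rewrite /=; congr (_, _); lia.
have [s0 [hs0 [en ek]]] := rep_of_cone hmin cone0.
have [c [o [oP [oB [so [eno hco]]]]]] := reduce B0 PB Ple hs0 erefl erefl.
have key : forall c' o', all (inA A) o' -> n = (c' * B + sumn o')%:Z ->
    (c' + size o')%:Z <= k -> False.
  move=> c' o' ho' en' hk; apply: nS; split.
    have k0 : 0 <= k by lia.
    rewrite -(gez0_abs k0) en'; apply: build; [by rewrite -bB|done|done|lia].
  exists (k - 1 - N), N; rewrite /=; congr (_, _); lia.
have [T [cone1 _]] :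
    exists j : nat, Sa A b a ((fun j : nat => (n + b * (j.+1)%:Z, k + (j.+1)%:Z)) j).
  apply: fin_pick hfin _ _.
    by move=> j1 j2 [] _ hj; lia.
  move=> j; exists m, (t + j.+1)%N; rewrite /=; congr (_, _); last by rewrite !PoszD; lia.
  by rewrite PoszD mulrDr -e1; lia.
have [s1 [hs1 [en1 ek1]]] := rep_of_cone hmin cone1.
have [c1 [o1 [o1P [o1B [so1 [eno1 hco1]]]]]] := reduce B0 PB Ple hs1 erefl erefl.
have bo1 : (sumn o1 <= B.-1 * size o1)%N.
  by apply: sumn_le_bound; apply/allP => y /(allP o1B); lia.
case: (ltnP T c1) => hc1.
  have [d ed] : exists d, c1 = (T.+1 + d)%N by exists (c1 - T.+1)%N; lia.
  rewrite ed in eno1 hco1.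
  exfalso; apply: (key d o1) => //.
    rewrite bB in en1; move: en1; rewrite eno1 en mulnDl !PoszD !PoszM; lia.
  lia.
have nb : (sumn s0 + B <= B.-1 * B.-1)%N.
  have h1 : (B.-1 * size o1 <= B.-1 * B.-1)%N by apply: leq_mul => //; lia.
  have h2 : (c1 * B <= T * B)%N by apply: leq_mul.
  rewrite bB en in en1; move: en1; rewrite eno1 -!PoszM -!PoszD => /eqP; rewrite eqz_nat => /eqP en2.
  rewrite mulnS in en2; lia.
have hc : (c.+1 < B.-1)%N.
  case: (ltnP c.+1 B.-1) => // hge; have := leq_mul hge (leqnn B).
  move: nb; rewrite eno; clear -B0; case: (B) B0 => // B' _ /=; nia.
rewrite leNgt; apply/negP => hk.
apply: (key c o) => //; first by rewrite en eno.
rewrite bB in hk; lia.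
Qed.
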